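(* Let $R$ be a finite commutative unital ring, $N\ge2$ with $N\in R^{\times}$, and $q\in R$ a root of the $N$-th cyclotomic polynomial over $\mathbb{Z}$. Let $\alpha$ be the exponent of $R^{\times}$ (which is divisible by $N$), let $k$ be the integer with $\alpha=kN$, and let $\beta$ be the nilpotence index of $R$. For $u\in R^{\times}$ and $a\in R$, the element \[\mathcal{Q}_u=(u^k-G^{\alpha})G^{\beta}\in T\] is a polynomial $H_N^q$-identity for $\mathcal{B}_{(u,a)}$.
   Context: The nilpotence index $\beta$ of $R$ is a positive integer such that $r^\beta=0$ for every nilpotent $r\in R$ (the largest nilpotency index of a nilpotent element). $H_N^q$ is the Taft Hopf algebra over $R$: generated by $g,x$ with $g^N=1$, $x^N=0$, $xg=qgx$, $\Delta(g)=g\otimes g$, $\Delta(x)=1\otimes x+x\otimes g$, $\varepsilon(g)=1$, $\varepsilon(x)=0$, free over $R$ with basis $\{g^mx^n:0\le m,n<N\}$. $\mathcal{B}_{(u,a)}$ is the $R$-algebra generated by $v_g,v_x$ with $v_g^N=u$, $v_x^N=a$, $v_xv_g=qv_gv_x$, a right $H_N^q$-comodule algebra via $v_g\mapsto v_g\otimes g$, $v_x\mapsto1\otimes x+v_x\otimes g$. Let $Z_i^H$ ($i\ge1$) be copies $\{Z_i^h:h\in H_N^q\}$ of the $R$-module $H_N^q$, $T=T(\bigoplus_iZ_i^H)$ the tensor algebra with coaction $\delta(Z_i^h)=\sum Z_i^{h_1}\otimes h_2$, and $G=Z_1^g$; $u^k$ denotes the scalar $u^k\cdot 1_T$. $P\in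 T$ is a polynomial $H_N^q$-identity for a right $H_N^q$-comodule algebra $B$ if $f(P)=0$ for all right $H_N^q$-comodule algebra maps $f:T\to B$. *)

(* Defs.v *)
From HB Require Import structures.
From mathcomp Require Import all_boot all_order all_algebra all_fingroup all_solvable all_field.
Set Implicit Arguments. Unset Strict Implicit. Unset Printing Implicit Defensive.
Import GRing.Theory.
Local Open Scope ring_scope.

(* Free R-modules of rank N^2: coordinates w.r.t. a basis indexed by pairs
   (m, n), 0 <= m, n < N.  For H_N^q the basis vector (m,n) is g^m x^n,
   for B_(u,a) it is v_g^m v_x^n. *)
Definition idx (N : nat) := ('I_N * 'I_N)%type.
Definition vec (R : Type) (N : nat) := {ffun idx N -> R}.
(* elements of  B (x) H  or  H (x) H : coordinates w.r.t. the tensor basis *)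
Definition tvec (R : Type) (N : nat) := {ffun idx N * idx N -> R}.

Section Twisted.
Variables (R : comNzRingType) (N : nat) (q : R).

Definition bas (m n : nat) : vec R N :=
  [ffun l : idx N => (((l.1 : nat) == (m %% N)%N) && ((l.2 : nat) == (n %% N)%N))%:R].

(* product of basis vectors in the algebra generated by A, X with
   A^N = u, X^N = a, X A = q A X :
   (A^m X^n)(A^m' X^n') = q^(n m') A^(m+m') X^(n+n') *)
Definition twprod (u a : R) (i j : idx N) : vec R N :=
  [ffun l => q ^+ (i.2 * j.1)%N * u ^+ ((i.1 + j.1) %/ N)%N
             * a ^+ ((i.2 + j.2) %/ N)%N * bas (i.1 + j.1)%N (i.2 + j.2)%N l].

(* bilinear extension: multiplication of B_(u,a); H_N^q is the case u=1,a=0 *)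
Definition twmul (u a : R) (b c : vec R N) : vec R N :=
  [ffun l => \sum_(i : idx N) \sum_(j : idx N) b i * c j * twprod u a i j l].

Definition tbas (m n m' n' : nat) : tvec R N :=
  [ffun l => bas m n l.1 * bas m' n' l.2].

Definition tenmul (u1 a1 u2 a2 : R) (w z : tvec R N) : tvec R N :=
  [ffun l => \sum_(p : idx N * idx N) \sum_(p' : idx N * idx N)
     w p * z p' * (twprod u1 a1 p.1 p'.1 l.1 * twprod u2 a2 p.2 p'.2 l.2)].

Definition powby {T : Type} (mul : T -> T -> T) (one : T) (x : T) (n : nat) : T :=
  iter n (mul x) one.

Definition tadd (w z : tvec R N) : tvec R N := [ffun l => w l + z l].

(* comultiplication of H_N^q on basis elements: the algebra map with
   Delta(g) = g (x) g, Delta(x) = 1 (x) x + x (x) g *)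
Definition Delta_bas (i : idx N) : tvec R N :=
  let mul := tenmul 1 0 1 0 in
  mul (powby mul (tbas 0 0 0 0) (tbas 1 0 1 0) i.1)
      (powby mul (tbas 0 0 0 0) (tadd (tbas 0 0 0 1) (tbas 0 1 1 0)) i.2).

(* coaction of B_(u,a) on basis elements: the algebra map with
   v_g |-> v_g (x) g, v_x |-> 1 (x) x + v_x (x) g *)
Definition coact_bas (u a : R) (i : idx N) : tvec R N :=
  let mul := tenmul u a 1 0 in
  mul (powby mul (tbas 0 0 0 0) (tbas 1 0 1 0) i.1)
      (powby mul (tbas 0 0 0 0) (tadd (tbas 0 0 0 1) (tbas 0 1 1 0)) i.2).

Definition coact (u a : R) (b : vec R N) : tvec R N :=
  [ffun l => \sum_(i : idx N) b i * coact_bas u a i l].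

(* (phi (x) id) applied to an element of H (x) H, phi : H -> B given on basis *)
Definition phi_tens (phi : idx N -> vec R N) (w : tvec R N) : tvec R N :=
  [ffun l => \sum_(p : idx N * idx N) w p * (phi p.1 l.1 * (p.2 == l.2)%:R)].

Definition colinear (u a : R) (phi : idx N -> vec R N) : Prop :=
  forall b : idx N, coact u a (phi b) = phi_tens phi (Delta_bas b).

End Twisted.

(* Elements of the tensor algebra T = T(\bigoplus_i Z_i^H), as terms.
   TZ i h stands for Z_(i+1)^h (h in H_N^q given by coordinates). *)
Inductive Tterm (R : Type) (N : nat) : Type :=
| TC of R
| TZ of nat & vec R N
| TAdd of Tterm R N & Tterm R N
| TOpp of Tterm R N
| TMul of Tterm R N & Tterm R N.

Arguments TC {R N}.
Arguments TZ {R N}.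
Arguments TAdd {R N}.
Arguments TOpp {R N}.
Arguments TMul {R N}.

Definition Tpow (R : Type) (N : nat) (one : R) (t : Tterm R N) (n : nat) : Tterm R N :=
  iter n (TMul t) (TC one).

Section Eval.
Variables (R : comNzRingType) (N : nat) (q u a : R).

(* The algebra map f : T -> B_(u,a) determined by the R-linear maps
   phi i : Z_(i+1)^H = H -> B (given on the basis of H). *)
Fixpoint evalT (phi : nat -> idx N -> vec R N) (t : Tterm R N) : vec R N :=
  match t with
  | TC r => [ffun l => r * bas R N 0 0 l]
  | TZ i h => [ffun l => \sum_(b : idx N) h b * phi i b l]
  | TAdd s t => [ffun l => evalT phi s l + evalT phi t l]
  | TOpp s => [ffun l => - evalT phi s l]
  | TMul s t => twmul q u a (evalT phi s) (evalT phi t)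
  end.

(* P is a polynomial H_N^q-identity for B_(u,a): f(P) = 0 for every
   comodule algebra map f : T -> B_(u,a), i.e. for every family of
   H-colinear maps phi i : H -> B. *)
Definition poly_identity (P : Tterm R N) : Prop :=
  forall phi : nat -> idx N -> vec R N,
    (forall i, colinear q u a (phi i)) ->
    evalT phi P = [ffun _ => 0].

End Eval.

Definition Gterm (R : comNzRingType) (N : nat) : Tterm R N := TZ 0 (bas R N 1 0).

Definition Qterm (R : comNzRingType) (N : nat) (u : R) (k alpha beta : nat) : Tterm R N :=
  TMul (TAdd (TC (u ^+ k)) (TOpp (Tpow 1 (Gterm R N) alpha))) (Tpow 1 (Gterm R N) beta).

Definition nilpotent_elt (R : comNzRingType) (r : R) : Prop := exists n : nat, r ^+ n = 0.

Definition nilpotence_index (R : comNzRingType) (beta : nat) : Prop :=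
  (0 < beta)%N /\ (forall r : R, nilpotent_elt r -> r ^+ beta = 0) /\
  (forall c : nat, (0 < c)%N -> (forall r : R, nilpotent_elt r -> r ^+ c = 0) -> (beta <= c)%N).

(* Main.v *)
Require Import Defs.
From HB Require Import structures.
From mathcomp Require Import all_boot all_order all_algebra all_fingroup all_solvable all_field.
From mathcomp Require Import ring zify.
Local Open Scope ring_scope.
Import GRing.Theory.

Lemma unit_exp (R : finComUnitRingType) (x : R) :
  x \is a GRing.unit -> x ^+ exponent [set: {unit R}] = 1.
Proof.
move=> Hx; have := expg_exponent (in_setT (FinRing.Unit Hx)).
by move/(congr1 val); rewrite FinRing.val_unitX.
Qed.

Lemma pigeon_pow (R : finComUnitRingType) (r : R) :
  exists s p, (0 < p)%N /\ r ^+ s = r ^+ (s + p).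
Proof.
pose f := fun i : 'I_(#|R|.+1) => r ^+ i.
case: (boolP (injectiveb f)) => [/injectiveP/leq_card|/injectivePn [i [j nij fij]]].
  by rewrite card_ord ltnn.
rewrite /f in fij.
case: (ltngtP i j) => [lt|gt|eq]; last by case/eqP: nij; apply: val_inj.
  exists i, (j - i)%N; split; first by rewrite subn_gt0.
  by rewrite subnKC ?(ltnW lt).
exists j, (i - j)%N; split; first by rewrite subn_gt0.
by rewrite subnKC ?(ltnW gt).
Qed.

Lemma key_ring (R : finComUnitRingType) beta (r : R) :
  (0 < beta)%N -> (forall s : R, nilpotent_elt s -> s ^+ beta = 0) ->
  r ^+ beta * (1 - r ^+ exponent [set: {unit R}]) = 0.
Proof.
move=> b0 nilb.
have [s [p [p0 Hsp]]] := pigeon_pow _ r.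
have per : forall x t, (s <= x)%N -> r ^+ (x + t * p) = r ^+ x.
  move=> x t sx; elim: t => [|t IH]; first by rewrite mul0n addn0.
  rewrite mulSn addnA (addnC x) -addnA exprD IH -exprD.
  by rewrite -{1}(subnKC sx) addnA (addnC p s) exprD -Hsp -exprD subnKC.
set m := (s.+1 * p)%N.
have sm : (s <= m)%N by rewrite /m mulSn; apply: leq_trans (leq_addl _ _) ; rewrite leq_pmulr.
set e := r ^+ m.
have ee : e * e = e by rewrite /e -exprD /m per.
set alpha := exponent _.
have wn : forall n, (r * e + (1 - e)) ^+ n = r ^+ n * e + (1 - e).
  elim=> [|n IH]; first by rewrite expr0 mul1r addrC subrK.
  rewrite exprS IH exprS.
  transitivity (r * r ^+ n * e + (1 - e) + (e * e - e) * (r * r ^+ n - r - r ^+ n + 1)).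
    by ring.
  by rewrite ee subrr mul0r addr0.
have m0 : (0 < m)%N by rewrite /m muln_gt0.
have wm : (r * e + (1 - e)) ^+ m = 1 by rewrite wn ee addrC subrK.
have wunit : r * e + (1 - e) \is a GRing.unit.
  apply/unitrP; exists ((r * e + (1 - e)) ^+ m.-1).
  by split; [rewrite -exprSr | rewrite -exprS]; rewrite prednK.
have ra : r ^+ alpha * e = e.
  have := unit_exp _ _ wunit; rewrite -/alpha wn => h.
  have := congr1 (fun z => z - (1 - e)) h; rewrite /= addrK => ->.
  by rewrite opprB addrC subrK.
have nil1 : (r * (1 - e)) ^+ beta = 0.
  apply: nilb; exists m.
  have h3 : forall n, (1 - e) ^+ n.+1 = 1 - e.
    elim=> [|n IH]; first by rewrite expr1.
    by rewrite exprS IH mulrBr mulr1 mulrBl mul1r ee subrr subr0.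
  by rewrite exprMn -(prednK m0) h3 prednK // -/e mulrBr mulr1 ee subrr.
have nil2 : r ^+ beta * (1 - e) = 0.
  move: nil1; rewrite exprMn -(prednK b0).
  have h3 : forall n, (1 - e) ^+ n.+1 = 1 - e.
    elim=> [|n IH]; first by rewrite expr1.
    by rewrite exprS IH mulrBr mulr1 mulrBl mul1r ee subrr subr0.
  by rewrite h3.
have -> : r ^+ beta * (1 - r ^+ alpha) =
   r ^+ beta * (1 - r ^+ alpha) * e + (r ^+ beta * (1 - e)) * (1 - r ^+ alpha).
  by ring.
rewrite nil2 mul0r addr0 -mulrA mulrBl mul1r ra subrr mulr0 //.
Qed.

Lemma sum_single (R : comNzRingType) (T : finType) (F : T -> R) j :
  (forall i, i != j -> F i = 0) -> \sum_i F i = F j.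
Proof. by move=> H; rewrite (bigD1 j) //= big1 ?addr0 // => i /H. Qed.
Arguments sum_single {R T F} j _.

Section Comp.
Variables (R : comNzRingType) (N : nat) (q : R).
Hypothesis N2 : (2 <= N)%N.

Lemma N0 : (0 < N)%N. Proof. exact: leq_trans N2. Qed.
Lemma N1 : (1 < N)%N. Proof. exact: N2. Qed.
Definition o0 : 'I_N := Ordinal N0.
Definition o1 : 'I_N := Ordinal N1.

Lemma bas_ord (i j : 'I_N) l : bas R N i j l = (l == (i, j))%:R.
Proof. by rewrite ffunE !modn_small //; case: l. Qed.

Lemma bas0 m n (l : idx N) : (l.2 != (n %% N)%N :> nat) -> bas R N m n l = 0.
Proof. by move=> H; rewrite ffunE (negbTE H) andbF. Qed.

Lemma tbas_ord (a b c d : 'I_N) l :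
  tbas R N a b c d l = (l == ((a, b), (c, d)))%:R.
Proof.
rewrite ffunE !bas_ord -natrM mulnb; case: l => l1 l2.
by rewrite [in RHS]xpair_eqE.
Qed.

Lemma tw_r0 u a (i : idx N) l : twprod q u a i (o0, o0) l = (l == i)%:R.
Proof.
rewrite ffunE /= !addn0 muln0 !divn_small // expr0 !mulr1 mul1r.
by rewrite bas_ord -surjective_pairing.
Qed.

Lemma tw_l0 u a (j : idx N) l : twprod q u a (o0, o0) j l = (l == j)%:R.
Proof.
rewrite ffunE /= !add0n mul0n !divn_small // !expr0 !mul1r.
by rewrite bas_ord -surjective_pairing.
Qed.

Lemma tenmul_lsingle u1 a1 u2 a2 (w z : tvec R N) t l :
  (forall p, p != t -> w p = 0) ->
  tenmul q u1 a1 u2 a2 w z l = \sum_p' w t * z p' *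
     (twprod q u1 a1 t.1 p'.1 l.1 * twprod q u2 a2 t.2 p'.2 l.2).
Proof.
move=> H; rewrite ffunE (sum_single t) // => p /H ->.
by apply: big1 => p' _; rewrite !mul0r.
Qed.
Arguments tenmul_lsingle u1 a1 u2 a2 w z t l _.

Lemma tenmul_1r u1 a1 u2 a2 (w : tvec R N) :
  tenmul q u1 a1 u2 a2 w (tbas R N 0 0 0 0) = w.
Proof.
have e0 : forall p, tbas R N 0 0 0 0 p = (p == ((o0, o0), (o0, o0)))%:R :=
  fun p => tbas_ord o0 o0 o0 o0 p.
apply/ffunP => l; rewrite ffunE (sum_single l) => [|p pl].
  rewrite (sum_single ((o0, o0), (o0, o0))) => [|p' hp'].
    by rewrite e0 eqxx mulr1 !tw_r0 !eqxx mulr1 mulr1.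
  by rewrite e0 (negbTE hp') mulr0 mul0r.
rewrite (sum_single ((o0, o0), (o0, o0))) => [|p' hp'].
  rewrite !tw_r0 e0 eqxx mulr1 -natrM mulnb -xpair_eqE -!surjective_pairing.
  by rewrite eq_sym (negbTE pl) mulr0.
by rewrite e0 (negbTE hp') mulr0 mul0r.
Qed.



Lemma Xpow u a m : (m < N)%N ->
  powby (tenmul q u a 1 0) (tbas R N 0 0 0 0) (tbas R N 1 0 1 0) m = tbas R N m 0 m 0.
Proof.
elim: m => [//|m IH] hm.
rewrite /powby iterS -/(powby _ _ _ m) IH ?(ltnW hm) //.
apply/ffunP => l.
have eX : forall p, tbas R N 1 0 1 0 p = (p == ((o1,o0),(o1,o0)))%:R :=
  fun p => tbas_ord o1 o0 o1 o0 p.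
pose om : 'I_N := Ordinal (ltnW hm).
have eM : forall p, tbas R N m 0 m 0 p = (p == ((om,o0),(om,o0)))%:R :=
  fun p => tbas_ord om o0 om o0 p.
rewrite (tenmul_lsingle _ _ _ _ _ _ ((o1,o0),(o1,o0))) => [|p hp]; last by rewrite eX (negbTE hp).
rewrite (sum_single ((om,o0),(om,o0))) => [|p hp]; last by rewrite eM (negbTE hp) mulr0 mul0r.
rewrite eX eM !eqxx !mul1r !ffunE /= mul0n !add0n add1n (divn_small hm) div0n.
by rewrite !mul1r.
Qed.


Definition Yv : tvec R N := tadd (tbas R N 0 0 0 1) (tbas R N 0 1 1 0).

Lemma tenmul_Y u1 a1 u2 a2 (z : tvec R N) l :
  tenmul q u1 a1 u2 a2 Yv z l =
   \sum_p' z p' * (twprod q u1 a1 (o0,o0) p'.1 l.1 * twprod q u2 a2 (o0,o1) p'.2 l.2)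
 + \sum_p' z p' * (twprod q u1 a1 (o0,o1) p'.1 l.1 * twprod q u2 a2 (o1,o0) p'.2 l.2).
Proof.
pose t1 : idx N * idx N := ((o0,o0),(o0,o1)).
pose t2 : idx N * idx N := ((o0,o1),(o1,o0)).
have eY : forall p, Yv p = (p == t1)%:R + (p == t2)%:R.
  move=> p; rewrite ffunE.
  have e1 : tbas R N 0 0 0 1 p = (p == t1)%:R := tbas_ord o0 o0 o0 o1 p.
  have e2 : tbas R N 0 1 1 0 p = (p == t2)%:R := tbas_ord o0 o1 o1 o0 p.
  by rewrite e1 e2.
have t21 : (t2 == t1) = false by [].
rewrite ffunE (bigD1 t1) // (bigD1 t2) //.

rewrite [\sum_(i | _ && _) _]big1 => [|p /andP[hp1 hp2]]; last first.
  by apply: big1 => p' _; rewrite eY (negbTE hp1) (negbTE hp2) addr0 !mul0r.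

rewrite /= addr0 !eY eqxx t21 eq_sym t21 addr0 add0r.
by congr (_ + _); apply: eq_bigr => p' _; rewrite mul1r.
Qed.


Definition Ypw u a n := powby (tenmul q u a 1 0) (tbas R N 0 0 0 0) Yv n.

Lemma Ypow u a n : (n < N)%N ->
  (forall l : idx N * idx N, (n < l.1.2)%N -> Ypw u a n l = 0) /\
  (forall l : idx N * idx N, (l.1.2 : nat) = 0%N ->
     Ypw u a n l = ((l.1.1 == 0 :> nat) && (l.2.1 == 0 :> nat) && (l.2.2 == n :> nat))%:R).
Proof.
elim: n => [|n IH] hn.
  split => l hl; rewrite /Ypw /= ffunE.
    by rewrite bas0 ?mul0r // mod0n -lt0n.
  by rewrite !ffunE !mod0n hl eqxx andbT -natrM mulnb andbA.
have [IH1 IH2] := IH (ltnW hn).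
change (Ypw u a n.+1) with (tenmul q u a 1 0 Yv (Ypw u a n)).
split => l hl; rewrite tenmul_Y.
  rewrite [X in X + _]big1 => [|p _]; last first.
    rewrite tw_l0; case: eqP => [e|_]; last by rewrite mul0r mulr0.
    by rewrite IH1 ?mul0r // -e; apply: ltnW.
  rewrite add0r big1 // => p _.
  case: (ltnP n p.1.2) => h; first by rewrite IH1 // mul0r.
  rewrite [twprod q u a (o0,o1) _ _]ffunE bas0 /=; first by rewrite !(mulr0, mul0r).
  rewrite modn_small; last by rewrite add1n; apply: leq_ltn_trans hn; rewrite ltnS.
  by apply/eqP => E; move: hl; rewrite E add1n ltnS ltnNge h.
rewrite [X in _ + X]big1 ?addr0 => [|p _]; last first.
  case: (ltnP n p.1.2) => h; first by rewrite IH1 // mul0r.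
  rewrite [twprod q u a (o0,o1) _ _]ffunE bas0 /=; first by rewrite !(mulr0, mul0r).
  rewrite modn_small; last by rewrite add1n; apply: leq_ltn_trans hn; rewrite ltnS.
  by rewrite hl.
pose on : 'I_N := Ordinal (ltnW hn).
rewrite (sum_single (l.1, (o0, on))) => [|p hp]; last first.
  rewrite tw_l0; case: eqP => [e|_]; last by rewrite mul0r mulr0.
  move: p hp e => [p1 [p21 p22]] /= hp e.
  have H : ~~ ((p21 == 0 :> nat) && (p22 == n :> nat)).
    apply: contra hp => /andP[/eqP h1 /eqP h2].
    by rewrite -e; apply/eqP; congr (_, (_, _)); apply: val_inj.
  rewrite IH2 /= -?e // -andbA (negbTE H) andbF.
  by rewrite !mul0r.
rewrite tw_l0 eqxx mul1r IH2 //= !eqxx !andbT.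
rewrite !ffunE /= !mod0n !add0n muln0 div0n (divn_small (m := n.+1)) // !expr0 !mul1r.
rewrite modn_small // -natrM mulnb.
by rewrite andbA.
Qed.


Lemma coact_bas_diag u a (i j : idx N) :
  coact_bas q u a i ((j.1, o0), j) = (i == j)%:R.
Proof.
rewrite /coact_bas /= Xpow // -/Yv -/(Ypw u a i.2).
have [_ Y2] := Ypow u a _ (ltn_ord i.2).
have eXi : forall p, tbas R N i.1 0 i.1 0 p = (p == ((i.1,o0),(i.1,o0)))%:R :=
  fun p => tbas_ord i.1 o0 i.1 o0 p.
rewrite (tenmul_lsingle _ _ _ _ _ _ ((i.1,o0),(i.1,o0))) => [|p hp]; last by rewrite eXi (negbTE hp).
rewrite eXi eqxx /=.
rewrite (sum_single ((o0,o0),(o0,i.2))) => [|p hp]; last first.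
  rewrite mul1r; case: (eqVneq (p.1.2 : nat) 0%N) => h.
    rewrite Y2 //.
    move: p hp h => [[p11 p12] [p21 p22]] /= hp h.
    have H : ~~ [&& p11 == 0 :> nat, p21 == 0 :> nat & p22 == i.2 :> nat].
      apply: contra hp => /and3P[/eqP e1 /eqP e2 /eqP e3]; apply/eqP.
      by congr ((_,_),(_,_)); apply: val_inj.
    by rewrite -andbA (negbTE H) !mul0r.
  rewrite [twprod q u a _ p.1 _]ffunE bas0 /=; first by rewrite !(mulr0,mul0r).
  by rewrite add0n modn_small // eq_sym.
rewrite mul1r Y2 //= !eqxx mul1r tw_r0.
rewrite [twprod q 1 0 _ _ _]ffunE /= muln0 addn0 add0n !divn_small // !expr0 !mul1r.
rewrite bas_ord -surjective_pairing.
case: (eqVneq i j) => [->|ne]; first by rewrite !eqxx mulr1.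
by rewrite mulr0.
Qed.


Lemma colinear_g u a (phi : idx N -> vec R N) : colinear q u a phi ->
  forall l, phi (o1,o0) l = phi (o1,o0) (o1,o0) * (l == (o1,o0))%:R.
Proof.
move=> col l.
case: eqP => [->|ne]; first by rewrite mulr1.
rewrite mulr0.
have := congr1 (fun f : tvec R N => f ((l.1, o0), l)) (col (o1,o0)) => /=.
rewrite ffunE (sum_single l) => [|i hi]; last by rewrite coact_bas_diag (negbTE hi) mulr0.
rewrite coact_bas_diag eqxx mulr1 => ->.
have eX : forall p, tbas R N 1 0 1 0 p = (p == ((o1,o0),(o1,o0)))%:R :=
  fun p => tbas_ord o1 o0 o1 o0 p.
have D : Delta_bas q (o1,o0) = tbas R N 1 0 1 0.
  by rewrite /Delta_bas /powby /= !tenmul_1r.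
rewrite D ffunE (sum_single ((o1,o0),(o1,o0))) => [|p hp]; last by rewrite eX (negbTE hp) mul0r.
rewrite eX eqxx mul1r /=.
by case: eqP => [e|_]; [case: ne | rewrite mulr0].
Qed.


Lemma bas_modl n m (l : idx N) : bas R N n m l = bas R N (n %% N) m l.
Proof. by rewrite !ffunE modn_mod. Qed.

Lemma evalG u a (phi : nat -> idx N -> vec R N) (c : R) :
  (forall l, phi 0%N (o1,o0) l = c * (l == (o1,o0))%:R) ->
  evalT q u a phi (Gterm R N) = [ffun l => c * (l == (o1,o0))%:R].
Proof.
move=> H; apply/ffunP => l; rewrite !ffunE.
have eB : forall b, bas R N 1 0 b = (b == (o1,o0))%:R := fun b => bas_ord o1 o0 b.
rewrite (sum_single (o1,o0)) => [|b hb]; last by rewrite eB (negbTE hb) mul0r.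
by rewrite eB eqxx mul1r H.
Qed.

Lemma evalGpow u a (phi : nat -> idx N -> vec R N) (c : R) :
  (forall l, phi 0%N (o1,o0) l = c * (l == (o1,o0))%:R) -> forall n,
  evalT q u a phi (Tpow 1 (Gterm R N) n) =
    [ffun l => c ^+ n * u ^+ (n %/ N) * bas R N n 0 l].
Proof.
move=> H; elim=> [|n IH].
  by apply/ffunP => l; rewrite !ffunE /= div0n !expr0 !mul1r.
change (evalT q u a phi (Tpow 1 (Gterm R N) n.+1)) with
  (twmul q u a (evalT q u a phi (Gterm R N)) (evalT q u a phi (Tpow 1 (Gterm R N) n))).
rewrite (evalG _ _ _ _ H) IH; apply/ffunP => l; rewrite !ffunE.
pose on : 'I_N := Ordinal (ltn_pmod n N0).
have eE : forall j, bas R N n 0 j = (j == (on,o0))%:R :=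
  fun j => etrans (bas_modl n 0 j) (bas_ord on o0 j).
have eE' : forall j : idx N,
    ((j.1 == (n %% N)%N :> nat) && (j.2 == (0 %% N)%N :> nat)) = (j == (on,o0)).
  by move=> j; rewrite mod0n; case: j.
rewrite (sum_single (o1,o0)) => [|i hi]; last first.
  by apply: big1 => j _; rewrite !ffunE (negbTE hi) !(mulr0, mul0r).
rewrite (sum_single (on,o0)) => [|j hj]; last first.
  by rewrite !ffunE eE' (negbTE hj) !(mulr0, mul0r).
rewrite !ffunE eE' !eqxx /= mul0n add0n div0n modnDmr add1n.
have -> : (n.+1 %/ N = n %/ N + (1 + n %% N) %/ N)%N.
  by rewrite {1}(divn_eq n N) -addnS divnMDl ?N0 // add1n.
rewrite exprD exprS !expr0.
by ring.
Qed.

Lemma evalQ u a (phi : nat -> idx N -> vec R N) (c : R) k alpha beta :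
  (forall l, phi 0%N (o1,o0) l = c * (l == (o1,o0))%:R) ->
  alpha = (k * N)%N -> c ^+ beta * (1 - c ^+ alpha) = 0 ->
  evalT q u a phi (Qterm N u k alpha beta) = [ffun _ => 0].
Proof.
move=> H hal key; apply/ffunP => l.
rewrite /Qterm /= !(evalGpow _ _ _ _ H) !ffunE.
apply: big1 => i _; apply: big1 => j _.
rewrite !ffunE hal mulnK ?N0 // modnMl !mod0n.
rewrite hal in key.
set B := (_ && _)%:R.
set Bj := (_ && _)%:R.
set T := (q ^+ _ * _ * _ * _).
transitivity ((c ^+ beta * (1 - c ^+ (k * N))) *
   (u ^+ k * B * (u ^+ (beta %/ N) * Bj) * T)).
  by ring.
by rewrite key mul0r.
Qed.

End Comp.

Theorem proposition3p5 (R : finComUnitRingType) (N : nat) (q : R)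
  (k beta : nat) (u a : R) :
  (2 <= N)%N ->
  (N%:R : R) \is a GRing.unit ->
  root (map_poly intr 'Phi_N) q ->
  exponent [set: {unit R}] = (k * N)%N ->
  nilpotence_index R beta ->
  u \is a GRing.unit ->
  poly_identity q u a (Qterm N u k (exponent [set: {unit R}]) beta).
Proof.
move=> N2 _ _ hexp [b0 [nilb _]] _ phi col.
have Hg := @colinear_g _ _ _ N2 _ _ _ (col 0%N).
apply: (@evalQ _ _ _ N2 u a phi _ k _ beta Hg hexp).
exact: key_ring.
Qed.
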